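(* For every $\varepsilon>0$ there exists $\delta>0$ such that for all sufficiently large $n$ the following holds: if $\mu\in\mathcal P(\Omega^n)$ is $(\delta,2)$-symmetric, then $\mu\otimes\mu$, viewed as a probability measure on $(\Omega\times\Omega)^n\cong\Omega^n\times\Omega^n$, is $(\varepsilon,2)$-symmetric.
   Context: $\Omega$ is a fixed finite nonempty set, $\mathcal P(\mathcal X)$ the set of probability measures on a finite set $\mathcal X$, $\|\cdot\|_{TV}$ total variation. For a finite set $\Omega'$ (here $\Omega$ or $\Omega\times\Omega$), $\nu\in\mathcal P(\Omega'^n)$ and $x,y\in[n]$, let $\nu_{\downarrow x}$ be the law of $\boldsymbol\sigma(x)$ and $\nu_{\downarrow\{x,y\}}$ the joint law of $(\boldsymbol\sigma(x),\boldsymbol\sigma(y))$ for $\boldsymbol\sigma\sim\nu$. The measure $\nu$ is $(\varepsilon,2)$-symmetric if $\frac1{n^2}\sum_{x,y\in[n]}\|\nu_{\downarrow\{x,y\}}-\nu_{\downarrow x}\otimes\nu_{\downarrow y}\|_{TV}<\varepsilon$. The identification of $\Omega^n\times\Omega^n$ with $(\Omega\times\Omega)^n$ maps $(\sigma,\tau)$ to $((\sigma(x),\tau(x)))_{x\in[n]}$. *)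

(* Defs.v *)
From HB Require Import structures.
From mathcomp Require Import all_boot all_order all_algebra.
From mathcomp Require Import reals.
Set Implicit Arguments. Unset Strict Implicit. Unset Printing Implicit Defensive.
Import Order.TTheory GRing.Theory Num.Theory.
Local Open Scope ring_scope.

Section Defs.
Variable R : realType.

Definition is_prob (T : finType) (nu : {ffun T -> R}) : Prop :=
  (forall t, 0 <= nu t) /\ \sum_(t : T) nu t = 1.

(* total variation distance: sup_A |p(A)-q(A)| = (1/2) sum |p t - q t| *)
Definition tv (T : finType) (p q : {ffun T -> R}) : R :=
  2^-1 * \sum_(t : T) `|p t - q t|.

Definition prod_meas (A B : finType) (p : {ffun A -> R}) (q : {ffun B -> R})
  : {ffun A * B -> R} := [ffun ab => p ab.1 * q ab.2].

Definition marg1 (O : finType) (n : nat) (nu : {ffun {ffun 'I_n -> O} -> R})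
  (x : 'I_n) : {ffun O -> R} :=
  [ffun a => \sum_(s : {ffun 'I_n -> O} | s x == a) nu s].

Definition marg2 (O : finType) (n : nat) (nu : {ffun {ffun 'I_n -> O} -> R})
  (x y : 'I_n) : {ffun O * O -> R} :=
  [ffun ab => \sum_(s : {ffun 'I_n -> O} | (s x == ab.1) && (s y == ab.2)) nu s].

Definition symmetric2 (O : finType) (n : nat) (eps : R)
  (nu : {ffun {ffun 'I_n -> O} -> R}) : Prop :=
  (n%:R ^+ 2)^-1 * \sum_(x : 'I_n) \sum_(y : 'I_n)
     tv (marg2 nu x y) (prod_meas (marg1 nu x) (marg1 nu y)) < eps.

(* mu (x) mu on Omega^n x Omega^n, transported to (Omega x Omega)^n via
   (sigma,tau) |-> ((sigma(x),tau(x)))_x *)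
Definition pair_meas (O : finType) (n : nat) (mu : {ffun {ffun 'I_n -> O} -> R})
  : {ffun {ffun 'I_n -> (O * O)%type} -> R} :=
  [ffun s : {ffun 'I_n -> (O * O)%type} => mu [ffun i => (s i).1] * mu [ffun i => (s i).2]].

End Defs.

(* Main.v *)
Require Import Defs.
From HB Require Import structures.
From mathcomp Require Import all_boot all_order all_algebra.
From mathcomp Require Import reals.
From mathcomp Require Import ring.
Import Order.TTheory GRing.Theory Num.Theory.
Local Open Scope ring_scope.

Section Aux.
Set Implicit Arguments.
Variable R : realType.
Variable O : finType.

Lemma prod_tv_bound (T : finType) (f g : T -> R) :
  (forall t, 0 <= f t) -> (forall t, 0 <= g t) ->
  \sum_t f t = 1 -> \sum_t g t = 1 ->
  \sum_(p : T * T) `|f p.1 * f p.2 - g p.1 * g p.2| <= 2 * \sum_t `|f t - g t|.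
Proof.
move=> hf hg sf sg.
rewrite -(pair_bigA _ (fun a b => `|f a * f b - g a * g b|)) /=.
apply: le_trans (_ : \sum_a \sum_b (f a * `|f b - g b| + `|f a - g a| * g b) <= _).
  apply: ler_sum => a _; apply: ler_sum => b _.
  have -> : f a * f b - g a * g b = f a * (f b - g b) + (f a - g a) * g b by ring.
  apply: le_trans (ler_normD _ _) _.
  by rewrite !normrM (ger0_norm (hf a)) (ger0_norm (hg b)).
rewrite le_eqVlt; apply/orP; left; apply/eqP.
have -> : \sum_a \sum_b (f a * `|f b - g b| + `|f a - g a| * g b) =
   \sum_a (f a * \sum_b `|f b - g b| + `|f a - g a|).
  apply: eq_bigr => a _; by rewrite big_split /= -!mulr_sumr sg mulr1.
by rewrite big_split /= -mulr_suml sf mul1r; ring.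
Qed.

Lemma sum_fiber (T U : finType) (F : T -> R) (f : T -> U) :
  \sum_u \sum_(t | f t == u) F t = \sum_t F t.
Proof. by rewrite [RHS](partition_big f predT). Qed.

Variable n : nat.
Variable mu : {ffun {ffun 'I_n -> O} -> R}.

Definition hsp (s : {ffun 'I_n -> (O * O)%type}) :=
  ([ffun i => (s i).1], [ffun i => (s i).2]).

Lemma hsp_bij : bijective hsp.
Proof.
exists (fun p : {ffun 'I_n -> O} * {ffun 'I_n -> O} => [ffun i => (p.1 i, p.2 i)]).
  by move=> s; apply/ffunP => i; rewrite /hsp /= !ffunE; case: (s i).
by case=> a b; rewrite /hsp /=; congr pair; apply/ffunP => i; rewrite !ffunE.
Qed.

Lemma sum_pair_prod (P Q : pred {ffun 'I_n -> O}) :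
  \sum_(s : {ffun 'I_n -> (O * O)%type} | P [ffun i => (s i).1] && Q [ffun i => (s i).2])
     pair_meas mu s = (\sum_(σ | P σ) mu σ) * (\sum_(τ | Q τ) mu τ).
Proof.
rewrite [RHS]mulr_suml. under [RHS]eq_bigr do rewrite mulr_sumr.
rewrite [RHS]pair_big_dep /= (reindex hsp); last exact: onW_bij hsp_bij.
by apply: eq_bigr => s _; rewrite ffunE.
Qed.

Lemma marg2_pair (x y : 'I_n) t :
  marg2 (pair_meas mu) x y t =
  marg2 mu x y (t.1.1, t.2.1) * marg2 mu x y (t.1.2, t.2.2).
Proof.
rewrite !ffunE /= -sum_pair_prod; apply: eq_bigl => s /=.
rewrite !ffunE; case: t => [[a b] [c d]] /=.
case: (s x) (s y) => [p q] [r w]; rewrite !xpair_eqE /=.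
by rewrite andbACA.
Qed.

Lemma marg1_pair (x : 'I_n) t :
  marg1 (pair_meas mu) x t = marg1 mu x t.1 * marg1 mu x t.2.
Proof.
rewrite !ffunE /= -sum_pair_prod; apply: eq_bigl => s /=.
rewrite !ffunE; case: t => [a b] /=.
by case: (s x) => [p q]; rewrite !xpair_eqE.
Qed.

Hypothesis hmu : is_prob mu.

Lemma marg1_prob x : (forall a, 0 <= marg1 mu x a) /\ \sum_a marg1 mu x a = 1.
Proof.
case: hmu => h0 h1; split.
  by move=> a; rewrite ffunE; apply: sumr_ge0 => s _; apply: h0.
by under eq_bigr do rewrite ffunE; rewrite sum_fiber.
Qed.

Lemma marg2_prob x y : (forall a, 0 <= marg2 mu x y a) /\ \sum_a marg2 mu x y a = 1.
Proof.
case: hmu => h0 h1; split.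
  by move=> a; rewrite ffunE; apply: sumr_ge0 => s _; apply: h0.
rewrite -h1 -(@sum_fiber _ _ mu (fun s : {ffun 'I_n -> O} => (s x, s y))).

apply: eq_bigr => -[a b] _; rewrite ffunE; apply: eq_bigl => s /=.
by rewrite xpair_eqE.
Qed.

Lemma prodm_prob x y : (forall a, 0 <= prod_meas (marg1 mu x) (marg1 mu y) a) /\
   \sum_a prod_meas (marg1 mu x) (marg1 mu y) a = 1.
Proof.
have [h0 h1] := marg1_prob x; have [k0 k1] := marg1_prob y; split.
  by move=> a; rewrite ffunE mulr_ge0.
under eq_bigr do rewrite ffunE.
rewrite -(pair_bigA _ (fun a b => marg1 mu x a * marg1 mu y b)) /=.
by under eq_bigr do rewrite -mulr_sumr k1 mulr1.
Qed.

Lemma prod_measE (A B : finType) (p : {ffun A -> R}) (q : {ffun B -> R}) t :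
  prod_meas p q t = p t.1 * q t.2.
Proof. by rewrite ffunE. Qed.

Definition psi (t : ((O * O) * (O * O))%type) : ((O * O) * (O * O))%type :=
  ((t.1.1, t.2.1), (t.1.2, t.2.2)).

Lemma psi_inv : involutive psi.
Proof. by case=> [[a b] [c d]]. Qed.

Lemma tv_pair x y :
  tv (marg2 (pair_meas mu) x y) (prod_meas (marg1 (pair_meas mu) x) (marg1 (pair_meas mu) y))
  <= 2 * tv (marg2 mu x y) (prod_meas (marg1 mu x) (marg1 mu y)).
Proof.
rewrite /tv [leRHS]mulrCA.
apply: ler_wpM2l; first by rewrite invr_ge0 ler0n.
set pi := marg2 mu x y; set rho := prod_meas (marg1 mu x) (marg1 mu y).
have [p0 p1] := marg2_prob x y; have [r0 r1] := prodm_prob x y.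
apply: le_trans _ (@prod_tv_bound _ pi rho p0 r0 p1 r1).
rewrite [leRHS](reindex_inj (inv_inj psi_inv)) le_eqVlt; apply/orP; left; apply/eqP.
apply: eq_bigr => t _; rewrite marg2_pair prod_measE !marg1_pair /pi /rho /psi /= !prod_measE /=.
congr (`|_ - _|); ring.
Qed.

End Aux.

Theorem proposition2p5 (R : realType) (Omega : finType)
  (hOmega : (0 < #|Omega|)%N) :
  forall eps : R, 0 < eps ->
  exists2 delta : R, 0 < delta &
  exists N : nat, forall n : nat, (N <= n)%N ->
  forall mu : {ffun {ffun 'I_n -> Omega} -> R},
    is_prob mu -> symmetric2 delta mu -> symmetric2 eps (pair_meas mu).
Proof.
move=> eps he; exists (eps / 2); first by rewrite divr_gt0.
exists 0%N => n _ mu hmu; rewrite /symmetric2 => hs.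
have h : \sum_x \sum_y tv (marg2 (pair_meas mu) x y)
     (prod_meas (marg1 (pair_meas mu) x) (marg1 (pair_meas mu) y)) <=
   2 * \sum_(x : 'I_n) \sum_(y : 'I_n) tv (marg2 mu x y) (prod_meas (marg1 mu x) (marg1 mu y)).
  rewrite mulr_sumr; apply: ler_sum => x _; rewrite mulr_sumr; apply: ler_sum => y _.
  exact: tv_pair.
apply: le_lt_trans (_ : (n%:R ^+ 2)^-1 * (2 * \sum_(x : 'I_n) \sum_(y : 'I_n)
   tv (marg2 mu x y) (prod_meas (marg1 mu x) (marg1 mu y))) < _).
  by apply: ler_wpM2l => //; rewrite invr_ge0 exprn_ge0 // ler0n.
rewrite mulrCA.
have -> : eps = 2 * (eps / 2) by field.
by rewrite ltr_pM2l.
Qed.
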